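(* Let $1\le k\le n-2$ and let $\Sigma=\mathbb{S}^k\times\mathbb{R}^{n-k}\subset\mathbb{R}^{n+1}$ be a self-shrinker. Let $P_1,P_2\subset\mathbb{R}^{n-k}$ be two orthogonal $(n-k-1)$-dimensional linear subspaces, which divide $\mathbb{R}^{n-k}$ into four open quarter-spaces $Q_1,\dots,Q_4$. Then each $\mathbb{S}^k\times Q_i\subset\Sigma$ is stable.
   Context: $\mathbb{S}^k$ is the round sphere of radius $\sqrt{2k}$ centered at the origin of $\mathbb{R}^{k+1}$. Stability operator: $Lf=\Delta f-\tfrac12\langle\vec x,\nabla f\rangle+(|A|^2+\tfrac12)f$. A region $\Omega$ is stable if there is a function $u$ with $Lu=0$ and $u>0$ on $\Omega$. *)

(* Defs.v *)
From Stdlib Require Import Reals Lra.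
Open Scope R_scope.

(* Points of R^{n+1}: coordinates 0..n of a function nat -> R.
   Coordinates 0..k  : the sphere factor R^{k+1} (S^k of radius sqrt(2k)).
   Coordinates k+1..n: the Euclidean factor R^{n-k}. *)
Definition pt := nat -> R.

Definition sph_sq (k : nat) (x : pt) : R := sum_f_R0 (fun i => x i ^ 2) k.

Definition euc_dot (n k : nat) (x y : pt) : R := sum_f (S k) n (fun i => x i * y i).

Definition in_Sigma (n k : nat) (x : pt) : Prop :=
  sph_sq k x = 2 * INR k /\ (forall i, (n < i)%nat -> x i = 0).

Definition sgn (b : bool) : R := if b then 1 else -1.

(* The four open quarter-spaces cut out by the hyperplanes v1^perp, v2^perp
   of R^{n-k}: sign choices (b1,b2). *)
Definition quarter (n k : nat) (v1 v2 : pt) (b1 b2 : bool) (y : pt) : Prop :=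
  0 < sgn b1 * euc_dot n k y v1 /\ 0 < sgn b2 * euc_dot n k y v2.

Definition Omega (n k : nat) (v1 v2 : pt) (b1 b2 : bool) (x : pt) : Prop :=
  in_Sigma n k x /\ quarter n k v1 v2 b1 b2 x.

(* nearest-point projection onto Sigma (radial in the sphere factor) *)
Definition proj (k : nat) (x : pt) : pt :=
  fun i => if (i <=? k)%nat then sqrt (2 * INR k) * x i / sqrt (sph_sq k x) else x i.

(* unit normal field of Sigma (extended, constant along normal lines) *)
Definition nu (k : nat) (x : pt) : pt :=
  fun i => if (i <=? k)%nat then x i / sqrt (sph_sq k x) else 0.

Definition shift (x : pt) (i : nat) (t : R) : pt :=
  fun j => if Nat.eqb j i then x j + t else x j.

Definition partial (F : pt -> R) (i : nat) (x : pt) (l : R) : Prop :=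
  derivable_pt_lim (fun t => F (shift x i t)) 0 l.

(* |A|^2 at p = |D nu (p)|^2 (Frobenius norm of the derivative of the
   unit normal field, i.e. of the shape operator) *)
Definition secff_sq (n k : nat) (p : pt) (a : R) : Prop :=
  exists D : nat -> nat -> R,
    (forall i j, (i <= n)%nat -> (j <= n)%nat ->
       partial (fun x => nu k x j) i p (D i j)) /\
    a = sum_f_R0 (fun i => sum_f_R0 (fun j => D i j ^ 2) n) n.

Definition cont_at (n : nat) (F : pt -> R) (x : pt) : Prop :=
  forall eps, 0 < eps -> exists delta, 0 < delta /\
    forall y, (forall m, (m <= n)%nat -> Rabs (y m - x m) < delta) ->
              (forall m, (n < m)%nat -> y m = x m) ->
              Rabs (F y - F x) < eps.

Definition C2_on (n : nat) (W : pt -> Prop) (U : pt -> R)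
    (G : nat -> pt -> R) (H : nat -> nat -> pt -> R) : Prop :=
  forall x, W x -> forall i j, (i <= n)%nat -> (j <= n)%nat ->
    partial U i x (G i x) /\ partial (G i) j x (H i j x) /\ cont_at n (H i j) x.

(* A region Om of Sigma is stable: there is a (C^2) function u with
   L u = 0 and u > 0 on Om, where
   L u = Delta_Sigma u - 1/2 <x, grad u> + (|A|^2 + 1/2) u.
   Delta_Sigma u and grad_Sigma u at p in Sigma are computed as the ambient
   Laplacian/gradient of the normal-constant extension U = u o proj. *)
Definition stable (n k : nat) (Om : pt -> Prop) : Prop :=
  exists (u : pt -> R) (G : nat -> pt -> R) (H : nat -> nat -> pt -> R),
    C2_on n (fun x => 0 < sph_sq k x /\ Om (proj k x)) (fun x => u (proj k x)) G H /\
    forall p, Om p ->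
      0 < u p /\
      exists a, secff_sq n k p a /\
        sum_f_R0 (fun i => H i i p) n
        - / 2 * sum_f_R0 (fun i => p i * G i p) n
        + (a + / 2) * u p = 0.

(* Main.v *)
Require Import Defs.
From Stdlib Require Import Reals Lra Lia.
From Coquelicot Require Import Coquelicot.
Open Scope R_scope.

Definition mask (k : nat) (v : pt) (i : nat) : R := if (S k <=? i)%nat then v i else 0.

Lemma sumB f i N : sum_f_R0 (fun j => if (j =? i)%nat then f j else 0) N
   = if (i <=? N)%nat then f i else 0.
Proof.
induction N as [|N IH].
- destruct i; simpl; auto.
- cbn [sum_f_R0]. rewrite IH. destruct (Nat.leb_spec i N), (Nat.leb_spec i (S N)), (Nat.eqb_spec (S N) i); subst; try lia; try ring.
  all: try (simpl; rewrite ?Nat.eqb_refl; ring).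
  all: try (destruct (Nat.leb_spec (S N) N); try lia; ring).
Qed.

Lemma sumA k n f : (k < n)%nat -> sum_f (S k) n f = sum_f_R0 (fun i => if (S k <=? i)%nat then f i else 0) n.
Proof.
intros H. rewrite (tech2 _ k n H).
rewrite sum_eq_R0; [|intros m Hm; destruct (Nat.leb_spec (S k) m); try lia; reflexivity].
unfold sum_f. rewrite Rplus_0_l. apply sum_eq. intros i Hi.
destruct (Nat.leb_spec (S k) (S k + i)); try lia. f_equal; lia.
Qed.

Lemma dot_shift n k x v i t : (k < n)%nat -> (i <= n)%nat ->
  euc_dot n k (shift x i t) v = euc_dot n k x v + t * mask k v i.
Proof.
intros Hk Hi. unfold euc_dot. rewrite !sumA by auto.
rewrite (sum_eq _ (fun j => (if (S k <=? j)%nat then x j * v j else 0) + (if (j =? i)%nat then t * mask k v j else 0))).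
- rewrite sum_plus, sumB. destruct (Nat.leb_spec i n); try lia. reflexivity.
- intros j _. unfold shift, mask. destruct (Nat.eqb_spec j i); destruct (Nat.leb_spec (S k) j); ring.
Qed.

Lemma dot_proj n k x v : (k < n)%nat -> euc_dot n k (proj k x) v = euc_dot n k x v.
Proof.
intros Hk. unfold euc_dot. rewrite !sumA by auto. apply sum_eq. intros j _.
unfold proj. destruct (Nat.leb_spec (S k) j); auto. destruct (Nat.leb_spec j k); try lia. reflexivity.
Qed.

Lemma sph_shift k x i t : sph_sq k (shift x i t) = sph_sq k x + (if (i <=? k)%nat then 2 * t * x i + t ^ 2 else 0).
Proof.
unfold sph_sq.
rewrite (sum_eq _ (fun j => x j ^ 2 + (if (j =? i)%nat then 2 * t * x j + t ^ 2 else 0))).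
- rewrite sum_plus, sumB. reflexivity.
- intros j _. unfold shift. destruct (Nat.eqb_spec j i); ring.
Qed.

Definition Dm (k : nat) (p : pt) (i j : nat) : R :=
  if andb (i <=? k)%nat (j <=? k)%nat then
    (if (i =? j)%nat then / sqrt (sph_sq k p) else 0) - p i * p j / (sqrt (sph_sq k p)) ^ 3
  else 0.

Lemma der_const (c x : R) : is_derive (fun _ : R => c) x 0.
Proof. auto_derive; auto. Qed.

Lemma nu_partial k p i j : 0 < sph_sq k p -> partial (fun x => nu k x j) i p (Dm k p i j).
Proof.
intros HS. unfold partial. apply is_derive_Reals.
set (S0 := sph_sq k p) in *.
assert (Hr : 0 < sqrt S0) by (apply sqrt_lt_R0; auto).
unfold nu, Dm. destruct (Nat.leb_spec j k) as [Hj|Hj].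
2:{ rewrite Bool.andb_false_r. apply der_const. }
rewrite Bool.andb_true_r. destruct (Nat.leb_spec i k) as [Hi|Hi].
- eapply is_derive_ext.
  { intro t. symmetry. rewrite sph_shift. fold S0. destruct (Nat.leb_spec i k); try lia. reflexivity. }
  unfold shift. destruct (Nat.eqb_spec j i) as [->|Hne].
  + rewrite Nat.eqb_refl.
    auto_derive; replace (S0 + (2 * 0 * p i + 0 * (0 * 1))) with S0 by ring; fold S0.
    * repeat split; lra.
    * field. lra.
  + destruct (Nat.eqb_spec i j); try lia.
    auto_derive; replace (S0 + (2 * 0 * p i + 0 * (0 * 1))) with S0 by ring; fold S0.
    * repeat split; lra.
    * field. lra.
- eapply is_derive_ext.
  { intro t. symmetry. rewrite sph_shift. fold S0. destruct (Nat.leb_spec i k); try lia.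
    unfold shift. destruct (Nat.eqb_spec j i); try lia. reflexivity. }
  apply der_const.
Qed.

Lemma sumR f k n : (k <= n)%nat -> sum_f_R0 (fun i => if (i <=? k)%nat then f i else 0) n = sum_f_R0 f k.
Proof.
intros H. destruct (Nat.eq_dec k n) as [->|Hne].
- apply sum_eq. intros i Hi. destruct (Nat.leb_spec i n); try lia; auto.
- rewrite (tech2 _ k n) by lia. rewrite sum_eq_R0 with (N := (n - S k)%nat).
  + rewrite Rplus_0_r. apply sum_eq. intros i Hi. destruct (Nat.leb_spec i k); try lia; auto.
  + intros m _. destruct (Nat.leb_spec (S k + m) k); try lia; auto.
Qed.

Lemma Dsum k n p : (k <= n)%nat -> 0 < sph_sq k p ->
  sum_f_R0 (fun i => sum_f_R0 (fun j => Dm k p i j ^ 2) n) n = INR k / sph_sq k p.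
Proof.
intros Hkn HS.
set (r := sqrt (sph_sq k p)).
assert (Hr : 0 < r) by (apply sqrt_lt_R0; auto).
assert (Hr2 : r * r = sph_sq k p) by (apply sqrt_sqrt; lra).
rewrite (sum_eq _ (fun i => if (i <=? k)%nat then / r ^ 2 - p i ^ 2 / r ^ 4 else 0)).
- rewrite sumR by auto.
  rewrite (sum_eq _ (fun i => / r ^ 2 + p i ^ 2 * (- / r^4))) by (intros; field; lra).
  rewrite sum_plus, <- scal_sum. fold (sph_sq k p). rewrite <- Hr2.
  rewrite sum_cte. rewrite S_INR. field. lra.
- intros i Hi. unfold Dm. destruct (Nat.leb_spec i k) as [Hik|Hik].
  + rewrite (sum_eq _ (fun j => if (j <=? k)%nat then
        ((if (j =? i)%nat then / r ^ 2 - 2 * p i * p j / r ^ 4 else 0) + p i ^ 2 / r ^ 6 * p j ^ 2) else 0)).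
    * rewrite sumR by auto. rewrite sum_plus, sumB.
      destruct (Nat.leb_spec i k); try lia.
      rewrite (sum_eq _ (fun l => p l ^ 2 * (p i ^ 2 / r ^ 6))) by (intros; ring).
      rewrite <- scal_sum. change (sum_f_R0 (fun l => p l ^ 2) k) with (sph_sq k p).
      rewrite <- Hr2. field. lra.
    * intros j _. destruct (Nat.leb_spec j k); cbn [andb]; [|ring]. rewrite Nat.eqb_sym.
      destruct (Nat.eqb_spec j i) as [->|]; fold r; field; lra.
  + apply sum_eq_R0. intros; cbn [andb]; ring.
Qed.

Lemma msum n k f g : (k < n)%nat -> sum_f_R0 (fun i => f i * mask k g i) n = euc_dot n k f g.
Proof.
intros H. unfold euc_dot. rewrite sumA by auto. apply sum_eq. intros i _.
unfold mask. destruct (Nat.leb_spec (S k) i); ring.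
Qed.

Lemma dot_mask n k a b : (k < n)%nat -> euc_dot n k (mask k a) b = euc_dot n k a b.
Proof.
intros H. unfold euc_dot. rewrite !sumA by auto. apply sum_eq. intros i _.
unfold mask. destruct (Nat.leb_spec (S k) i); ring.
Qed.

Theorem proposition4p4 (n k : nat) (v1 v2 : pt) (b1 b2 : bool) :
  (1 <= k)%nat -> (k <= n - 2)%nat ->
  (exists i, (S k <= i <= n)%nat /\ v1 i <> 0) ->
  (exists i, (S k <= i <= n)%nat /\ v2 i <> 0) ->
  euc_dot n k v1 v2 = 0 ->
  stable n k (Omega n k v1 v2 b1 b2).
Proof.
intros Hk Hkn _ _ Horth.
assert (Hlt : (k < n)%nat) by lia.
set (s := sgn b1 * sgn b2).
exists (fun x => s * euc_dot n k x v1 * euc_dot n k x v2),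
  (fun i x => s * (mask k v1 i * euc_dot n k x v2 + euc_dot n k x v1 * mask k v2 i)),
  (fun i j x => s * (mask k v1 i * mask k v2 j + mask k v1 j * mask k v2 i)).
split.
- intros x _ i j Hi Hj. split; [|split].
  + unfold partial. apply is_derive_Reals.
    apply (is_derive_ext (fun t => s * (euc_dot n k x v1 + t * mask k v1 i) * (euc_dot n k x v2 + t*mask k v2 i))).
    { intro t. rewrite !dot_proj, !dot_shift by auto. reflexivity. }
    auto_derive; auto; ring.
  + unfold partial. apply is_derive_Reals.
    apply (is_derive_ext (fun t => s * (mask k v1 i * (euc_dot n k x v2 + t * mask k v2 j) + (euc_dot n k x v1 + t * mask k v1 j) * mask k v2 i))).
    { intro t. rewrite !dot_shift by auto. reflexivity. }
    auto_derive; auto; ring.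
  + intros eps He. exists 1. split; [lra|]. intros y _ _.
    replace (_ - _) with 0 by ring. rewrite Rabs_R0. lra.
- intros p [[Hsph _] [Q1 Q2]].
  assert (HkR : 0 < INR k) by (apply lt_0_INR; lia).
  split.
  + replace (s * euc_dot n k p v1 * euc_dot n k p v2) with
      ((sgn b1 * euc_dot n k p v1) * (sgn b2 * euc_dot n k p v2)) by (unfold s; ring).
    apply Rmult_lt_0_compat; auto.
  + exists (/ 2). split.
    * exists (Dm k p). split.
      -- intros i j _ _. apply nu_partial. lra.
      -- rewrite Dsum by (lia || lra). rewrite Hsph. field. lra.
    * rewrite (sum_eq _ (fun i => mask k v1 i * mask k v2 i * (2 * s))) by (intros; ring).
      rewrite <- scal_sum, msum, dot_mask, Horth by auto.
      rewrite (sum_eq _ (fun i => p i * mask k v1 i * (s * euc_dot n k p v2)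
                                 + p i * mask k v2 i * (s * euc_dot n k p v1))) by (intros; ring).
      rewrite sum_plus, <- !scal_sum, !msum by auto. ring.
Qed.
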